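(* Let $K$ be a finite field of characteristic $p$ and order $q$, and let $s$ be a positive integer with $\gcd(s,q-1)=1$. For any $u\in K$ there exist unique nonnegative integers $w_0,\dots,w_{p-1}$ with $w_0>0$, $\sum_{i=0}^{p-1}w_i=q$ and $W_u=\sum_{i=0}^{p-1}w_i\zeta^i$. If $s$ is nondegenerate over $K$, then $w_i<q$ for every $i\in\{0,\dots,p-1\}$ and $|W_u|<q$.
   Context: $\zeta=\exp(2\pi i/p)$, $\psi(x)=\zeta^{\mathrm{Tr}(x)}$ with $\mathrm{Tr}$ the absolute trace of $K$ to $\mathbb{F}_p$; $W_u=\sum_{x\in K}\psi(x^s-ux)$. The exponent $s$ is degenerate over $K$ if $s\equiv p^k\pmod{q-1}$ for some integer $k$, and nondegenerate otherwise. *)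

(* Defs.v *)
From HB Require Import structures.
From mathcomp Require Import all_boot all_order all_algebra all_field.
Set Implicit Arguments. Unset Strict Implicit. Unset Printing Implicit Defensive.
Import Order.TTheory GRing.Theory Num.Theory.
Local Open Scope ring_scope.

(* zeta = exp(2 pi i / p) in algC: n.-root (-1) has argument pi/n, so its
   square has argument 2 pi / p. *)
Definition zeta (p : nat) : algC := (p.-root (-1)) ^+ 2.

Definition absTr (K : finFieldType) (p : nat) (x : K) : K :=
  \sum_(j < logn p #|K|) x ^+ (p ^ j).

(* The representative in {0,..,p-1} of Tr x, viewed in the prime field. *)
Definition trNat (K : finFieldType) (p : nat) (x : K) : nat :=
  odflt 0%N (omap (@nat_of_ord p) [pick k : 'I_p | (k%:R : K) == absTr p x]).

Definition psi (K : finFieldType) (p : nat) (x : K) : algC :=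
  zeta p ^+ trNat p x.

Definition Wsum (K : finFieldType) (p s : nat) (u : K) : algC :=
  \sum_(x : K) psi p (x ^+ s - u * x).

Definition degenerate (K : finFieldType) (p s : nat) : Prop :=
  exists k : nat, (s = p ^ k %[mod #|K|.-1])%N.

(* Main.v *)
Require Import Defs.
From HB Require Import structures.
From mathcomp Require Import all_boot all_order all_algebra all_field.
From mathcomp Require Import zify.
Import Order.TTheory GRing.Theory Num.Theory.
Local Open Scope ring_scope.

Set Implicit Arguments. Unset Strict Implicit. Unset Printing Implicit Defensive.

Lemma zeta_prim p : prime p -> p.-primitive_root (zeta p).
Proof.
move=> pr; have p_gt1 := prime_gt1 pr; have p_gt0 := prime_gt0 pr.
have zp : zeta p ^+ p = 1.
  by rewrite /zeta exprAC rootCK // sqrrN expr1n.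
have [m pm mp] := prim_order_exists p_gt0 zp.
have : (m == 1%N) || (m == p) by have := pr; case/primeP => _ /(_ m mp).
case/orP => /eqP Em; last by rewrite Em in pm.
exfalso; move: pm; rewrite Em => /prim_expr_order.
rewrite expr1 /zeta.
set z := p.-root (-1) => z2.
have zp1 : z ^+ p = -1 by rewrite rootCK.
have : (z - 1) * (z + 1) = 0 by rewrite -subr_sqr z2 expr1n subrr.
move/eqP; rewrite mulf_eq0 => /orP [|].
  rewrite subr_eq0 => /eqP z1; move: zp1; rewrite z1 expr1n => /eqP.
  by rewrite -subr_eq0 opprK -(natrD _ 1 1) pnatr_eq0.
rewrite addr_eq0 => /eqP zN.
have : (z < 0) = false by apply: rootC_lt0.
by rewrite zN ltrN10.
Qed.
Lemma zeta_uniq p (pr : prime p) (a b : 'I_p -> nat) :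
  (\sum_(i < p) a i)%N = (\sum_(i < p) b i)%N ->
  \sum_(i < p) (a i)%:R * zeta p ^+ i = \sum_(i < p) (b i)%:R * zeta p ^+ i ->
  forall i, a i = b i.
Proof.
have zprim := zeta_prim pr.
case: p pr a b zprim => [//|p'] pr a b zprim sab Wab.
set z := zeta p'.+1 in Wab zprim.
pose c (k : nat) : rat := (a (inord k))%:R - (b (inord k))%:R.
pose cl := c p'.
have z1 : z != 1.
  have := prim_order_dvd zprim 1; rewrite expr1 => <-.
  by rewrite dvdn1 eqSS -lt0n -ltnS prime_gt1.
have S0 : \sum_(i < p'.+1) z ^+ i = 0.
  apply/eqP; have := subrX1 z p'.+1; rewrite prim_expr_order // subrr => /esym/eqP.
  by rewrite mulf_eq0 subr_eq0 (negPf z1).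
have C0 : \sum_(i < p'.+1) ratr (c i) * z ^+ i = 0.
  rewrite /c; under eq_bigr => i _ do rewrite inord_val rmorphB /= !ratr_nat mulrBl.
  by rewrite sumrB Wab subrr.
pose R := \poly_(i < p') (c i - cl).
have rootR : root (map_poly (ratr : rat -> algC) R) z.
  rewrite /root (horner_coef_wide _ (n := p')); last first.
    by rewrite size_map_poly size_poly.
  apply/eqP; under eq_bigr => i _ do rewrite coef_map coef_poly ltn_ord /= rmorphB /= mulrBl.
  rewrite sumrB -mulr_sumr.
  move: C0 S0; rewrite !big_ord_recr /= => C0 S0.
  have -> : \sum_(i < p') ratr (c i) * z ^+ i = - (ratr cl * z ^+ p') by apply/eqP; rewrite -addr_eq0; apply/eqP; exact: C0.
  have -> : \sum_(i < p') z ^+ i = - z ^+ p' by apply/eqP; rewrite -addr_eq0; apply/eqP; exact: S0.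
  by rewrite mulrN opprK addNr.
have [pm [Epm _] dvd] := minCpolyP z.
have szpm : size pm = p'.+1.
  rewrite -(size_map_poly (ratr : {rmorphism rat -> algC})) -Epm (minCpoly_cyclotomic zprim) size_cyclotomic.
  by rewrite totient_prime.
have R0 : R = 0.
  apply/eqP; apply: contraT => nz.
  have : pm %| R by rewrite -dvd.
  move/(dvdp_leq nz).
  by rewrite szpm ltnNge (leq_trans (size_poly _ _)).
have cE : forall i : 'I_p'.+1, c i = cl.
  move=> i; have [/eqP ->|ne] := boolP (val i == p') => //.
  have ltip : (i < p')%N by have := ltn_ord i; rewrite ltnS leq_eqVlt (negPf ne).
  by have /eqP := congr1 (fun P : {poly rat} => P`_i) R0; rewrite coef0 coef_poly ltip subr_eq0 => /eqP.
have cl0 : cl = 0.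
  have : \sum_(i < p'.+1) c i = 0.
    rewrite /c; under eq_bigr => i _ do rewrite inord_val.
    by rewrite sumrB -!natr_sum sab subrr.
  under eq_bigr => i _ do rewrite cE.
  by rewrite sumr_const card_ord => /eqP; rewrite mulrn_eq0 /= => /eqP.
move=> i; have := cE i; rewrite cl0 /c inord_val => /eqP; rewrite subr_eq0 eqr_nat.
by move/eqP.
Qed.
Section Trace.
Variables (K : finFieldType) (p : nat) (hp : p \in [pchar K]).

Lemma pr_p : prime p. Proof. exact: pcharf_prime hp. Qed.

Lemma card_K : #|K| = (p ^ logn p #|K|)%N.
Proof. exact: (card_pprimeChar hp). Qed.

Lemma frobB (x y : K) j : (x - y) ^+ (p ^ j) = x ^+ (p ^ j) - y ^+ (p ^ j).
Proof.
elim: j => [|j IH]; first by rewrite !expn0 !expr1.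
rewrite expnSr !exprM IH.
exact: (rmorphB (pFrobenius_aut hp) (x ^+ (p ^ j)) (y ^+ (p ^ j))).
Qed.

Lemma absTrB (x y : K) : absTr p (x - y) = absTr p x - absTr p y.
Proof. by rewrite /absTr -sumrB; apply: eq_bigr => j _; rewrite frobB. Qed.

Lemma absTr0 : absTr p (0 : K) = 0.
Proof. by rewrite /absTr big1 // => j _; rewrite expr0n expn_eq0 (gtn_eqF (prime_gt0 pr_p)). Qed.

Lemma absTr_frob (x : K) : absTr p x ^+ p = absTr p x.
Proof.
rewrite /absTr.
have -> : (\sum_(j < logn p #|K|) x ^+ (p ^ j)) ^+ p
   = \sum_(j < logn p #|K|) x ^+ (p ^ j.+1).
  rewrite -pFrobenius_autE rmorph_sum /=; apply: eq_bigr => j _.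
  by rewrite pFrobenius_autE -exprM expnSr.
case En: (logn p #|K|) => [|n]; first by rewrite !big_ord0.
rewrite big_ord_recr big_ord_recl /= addrC; congr (_ + _).
by rewrite -En -card_K expf_card expn0 expr1.
Qed.

Lemma natr_inj_p (k l : nat) : (k < p)%N -> (l < p)%N -> (k%:R = l%:R :> K) -> k = l.
Proof.
wlog kl : k l / (k <= l)%N.
  move=> W kp lp E; case: (leqP k l) => [kl|/ltnW lk]; first exact: W.
  by apply/esym/W.
move=> kp lp E.
have : (p %| l - k)%N by rewrite (dvdn_pcharf hp) natrB // E subrr.
have [E0|lk] := posnP (l - k)%N; first by lia.
move/(dvdn_leq lk); lia.
Qed.

Lemma prime_field (y : K) : y ^+ p = y -> exists k : 'I_p, k%:R = y.
Proof.
move=> yp.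
have [k /eqP Hk|none] := pickP (fun k : 'I_p => k%:R == y); first by exists k.
exfalso.
have p_gt1 := prime_gt1 pr_p.
pose P : {poly K} := 'X^p - 'X.
pose rs := y :: [seq (k%:R : K) | k <- iota 0 p].
have P0 : P != 0.
  apply/eqP => /(congr1 (fun Q : {poly K} => Q`_p)).
  rewrite coef0 coefB coefXn coefX eqxx (gtn_eqF p_gt1) subr0 => /eqP.
  by rewrite oner_eq0.
have szP : (size P <= p.+1)%N.
  apply: leq_trans (size_polyD _ _) _; rewrite size_polyN size_polyX size_polyXn.
  by rewrite geq_max leqnn ltnS ltnW.
have := max_poly_roots P0 (rs := rs).
rewrite /= size_map size_iota.
have -> : root P y by rewrite /root !hornerE yp subrr.
have -> : all (root P) [seq (k%:R : K) | k <- iota 0 p].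
  apply/allP => _ /mapP [k _ ->].
  by rewrite /root !hornerE -pFrobenius_autE pFrobenius_aut_nat subrr.
have -> : y \notin [seq (k%:R : K) | k <- iota 0 p].
  apply/mapP => [[k]]; rewrite mem_iota add0n => /andP [_ kp] E.
  by have := none (Ordinal kp); rewrite /= E eqxx.
rewrite map_inj_in_uniq ?iota_uniq.
  by move=> /(_ isT isT); rewrite ltnNge szP.
move=> k l; rewrite !mem_iota !add0n => /andP [_ kp] /andP [_ lp].
exact: natr_inj_p.
Qed.

Lemma trNat_spec (x : K) : (trNat p x < p)%N /\ (trNat p x)%:R = absTr p x.
Proof.
rewrite /trNat; case: pickP => [k /eqP Hk | none] /=; first by [].
exfalso; have [k Hk] := prime_field (absTr_frob x).
by have := none k; rewrite Hk eqxx.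
Qed.

Lemma trNat_eq0 (x : K) : (trNat p x == 0%N) = (absTr p x == 0).
Proof.
have [lt E] := trNat_spec x; rewrite -E -(dvdn_pcharf hp).
apply/eqP/idP => [->|d]; first by rewrite dvdn0.
have [//|pos] := posnP (trNat p x).
by have := dvdn_leq pos d; lia.
Qed.

Lemma trNat0 : trNat p (0 : K) = 0%N.
Proof. by apply/eqP; rewrite trNat_eq0 absTr0. Qed.

End Trace.
Lemma nondeg (K : finFieldType) (p : nat) (hp : p \in [pchar K])
  (s : nat) (hs : (0 < s)%N) (hcop : coprime s #|K|.-1) (u : K) :
  (forall x : K, absTr p (x ^+ s - u * x) = 0) -> degenerate K p s.
Proof.
move=> H.
have prp := pr_p hp; have p_gt1 := prime_gt1 prp.
have q_gt1 : (1 < #|K|)%N := finNzRing_gt1 K.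
set q := #|K| in q_gt1 hcop *.
rewrite /degenerate -/q.
set m := q.-1 in hcop *.
have [m1|m_gt1] := leqP m 1%N.
  exists 0%N; have -> : m = 1%N by lia.
  by rewrite !modn1.
set n := logn p q.
have qE : q = (p ^ n)%N := card_K hp.
have n_gt0 : (0 < n)%N by move: q_gt1; rewrite qE; case: (n) => //; rewrite expn0.
have mq : q = m.+1 by rewrite /m prednK // ltnW.
have cop_mp : coprime m p.
  apply: (@coprime_dvdr _ q); first by rewrite qE -(prednK n_gt0) expnS dvdn_mulr.
  by rewrite mq coprimenS.
have pj_lt (j : nat) : (j < n)%N -> (p ^ j < m)%N.
  move=> jn; have h1 : (p ^ j * p <= q)%N by rewrite qE -expnSr leq_pexp2l // ltnW.
  have h2 : (0 < p ^ j)%N by rewrite expn_gt0 ltnW.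
  have h3 : (2 * p ^ j <= p * p ^ j)%N by rewrite leq_mul2r p_gt1 orbT.
  lia.
pose e (j : nat) := ((s * p ^ j) %% m)%N.
have xm (x : K) : x != 0 -> x ^+ m = 1.
  move=> x0; apply: (mulfI x0); rewrite mulr1 -exprS -mq; exact: expf_card.
have e_gt0 j : (0 < e j)%N.
  rewrite lt0n; change (~~ (m %| s * p ^ j))%N; apply/negP; rewrite coprime_sym in hcop.
  rewrite Gauss_dvdr // => dv.
  have cpm : coprime (p ^ j) m by rewrite coprime_sym coprimeXr.
  move: (coprime_dvdl dv cpm).
  by rewrite /coprime gcdnn => /eqP; lia.
have pow_red (x : K) j : x ^+ (s * p ^ j) = x ^+ e j.
  have [->|x0] := eqVneq x 0.
    rewrite !expr0n (gtn_eqF (e_gt0 j)) gtn_eqF // muln_gt0 hs expn_gt0 ltnW //.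
  by rewrite /e expr_mod // xm.
pose P : {poly K} := \sum_(j < n) 'X^(e j) - \sum_(j < n) u ^+ (p ^ j) *: 'X^(p ^ j).
have rootP (x : K) : root P x.
  apply/eqP; have := H x; rewrite (absTrB hp) /absTr => <-.
  rewrite /P hornerD hornerN !horner_sum; congr (_ - _); apply: eq_bigr => j _.
    by rewrite hornerXn -exprM pow_red.
  by rewrite hornerZ hornerXn exprMn.
have P0 : P = 0.
  apply: (roots_geq_poly_eq0 (rs := enum K)); first by apply/allP => x _.
    exact: enum_uniq.
  rewrite -cardE -/q mq; apply: leq_trans (size_polyD _ _) _.
  rewrite size_polyN geq_max; apply/andP; split.
    apply: (big_ind (fun Q : {poly K} => size Q <= m.+1)%N).
    - by rewrite size_poly0.
    - by move=> Q1 Q2 h1 h2; apply: leq_trans (size_polyD _ _) _; rewrite geq_max h1 h2.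
    - by move=> j _; rewrite size_polyXn ltnS ltnW // ltn_mod; lia.
  apply: (big_ind (fun Q : {poly K} => size Q <= m.+1)%N).
  - by rewrite size_poly0.
  - by move=> Q1 Q2 h1 h2; apply: leq_trans (size_polyD _ _) _; rewrite geq_max h1 h2.
  - move=> j _; apply: leq_trans (size_scale_leq _ _) _.
    by rewrite size_polyXn ltnS ltnW // pj_lt.
pose e0 := (s %% m)%N.
have [j /eqP Hj|none] := pickP (fun j : 'I_n => e0 == p ^ j)%N.
  by exists j; rewrite -/e0 Hj modn_small // pj_lt.
exfalso.
have := congr1 (fun Q : {poly K} => Q`_e0) P0.
rewrite coef0 /P coefB !coef_sum.
rewrite [X in _ - X]big1; last by move=> j _; rewrite coefZ coefXn none mulr0.
rewrite subr0 -(prednK n_gt0) big_ord_recl /=.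
rewrite big1; first by rewrite coefXn /e expn0 muln1 eqxx addr0 => /eqP; rewrite oner_eq0.
move=> j _; rewrite coefXn /e0 /e /=.
case: eqP => // E; exfalso; move/eqP: E; rewrite eq_sym.
have sle : (s <= s * p ^ (bump 0 j))%N by rewrite leq_pmulr // expn_gt0 ltnW.
rewrite eqn_mod_dvd // -{2}(muln1 s) -mulnBr Gauss_dvdr //.
have := pj_lt (bump 0 j); rewrite /bump /= add1n.
have : (j < n.-1)%N by [].
rewrite -ltnS (prednK n_gt0) => jn /(_ jn) lt.
have pos : (0 < p ^ j.+1 - 1)%N by rewrite subn_gt0 -(expn0 p) ltn_exp2l.
move/(dvdn_leq pos); lia.
by rewrite coprime_sym.
Qed.

Unset Implicit Arguments. Set Strict Implicit.

Lemma norm_zeta p : prime p -> `|zeta p| = 1.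
Proof.
move=> pr; rewrite /zeta normrX norm_rootC normrN1 rootC1 ?prime_gt0 // expr1n //.
Qed.

Theorem lemma3p2 (K : finFieldType) (p : nat) (hp : p \in [pchar K])
  (s : nat) (hs : (0 < s)%N) (hcop : coprime s #|K|.-1) (u : K) :
  exists w : {ffun 'I_p -> nat},
    [/\ (forall i : 'I_p, nat_of_ord i = 0%N -> (0 < w i)%N),
        (\sum_(i < p) w i)%N = #|K|,
        Wsum p s u = \sum_(i < p) (w i)%:R * zeta p ^+ i,
        (forall w' : {ffun 'I_p -> nat},
            (forall i : 'I_p, nat_of_ord i = 0%N -> (0 < w' i)%N) ->
            (\sum_(i < p) w' i)%N = #|K| ->
            Wsum p s u = \sum_(i < p) (w' i)%:R * zeta p ^+ i ->
            w' = w)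
      & (~ degenerate K p s ->
          (forall i : 'I_p, (w i < #|K|)%N) /\ `|Wsum p s u| < (#|K|)%:R)].
Proof.
have prp := pr_p hp; have p_gt0 := prime_gt0 prp.
pose f (x : K) := x ^+ s - u * x.
have trlt x : (trNat p x < p)%N := (trNat_spec hp x).1.
pose g (x : K) : 'I_p := Ordinal (trlt (f x)).
pose w := [ffun i : 'I_p => #|[pred x : K | g x == i]|].
have Wsum_eq : Wsum p s u = \sum_(i < p) (w i)%:R * zeta p ^+ i.
  rewrite /Wsum (partition_big g xpredT) //=.
  apply: eq_bigr => i _; rewrite ffunE.
  rewrite (eq_bigr (fun _ => zeta p ^+ i)); last by move=> x /eqP <-.
  by rewrite sumr_const mulr_natl.
have sum_w : (\sum_(i < p) w i)%N = #|K|.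
  rewrite -sum1_card (partition_big g xpredT) //=.
  by apply: eq_bigr => i _; rewrite ffunE sum1_card.
have w0 : forall i : 'I_p, nat_of_ord i = 0%N -> (0 < w i)%N.
  move=> i i0; rewrite ffunE; apply/card_gt0P; exists 0; rewrite inE /g.
  apply/eqP/val_inj => /=; rewrite i0 /f expr0n gtn_eqF // mulr0 subr0.
  exact: trNat0.
exists w; split => //.
  move=> w' _ sw' Ww'; apply/ffunP => i.
  apply: (zeta_uniq prp); first by rewrite sw' sum_w.
  by rewrite -Ww' Wsum_eq.
move=> nd.
have wlt : forall i, (w i < #|K|)%N.
  move=> i; rewrite ffunE ltn_neqAle max_card andbT; apply/negP => /eqP E.
  have allx : forall x, g x == i.
    move=> x; have /subset_cardP : #|[pred x : K | g x == i]| = #|predT : {pred K}|.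
      by rewrite -E.
    by move=> /(_ (subset_predT _)) /(_ x); rewrite inE /= => ->.
  apply: nd; apply: (nondeg hp hs hcop (u := u)) => x.
  have i0 : nat_of_ord i = 0%N.
    have := allx 0; rewrite /g => /eqP/(congr1 val) /= Ev; rewrite -Ev.
    by rewrite /f expr0n gtn_eqF // mulr0 subr0 trNat0.
  apply/eqP; have := trNat_eq0 hp (f x); rewrite /f => <-.
  have := allx x; rewrite /g => /eqP/(congr1 val) /= Ev.
  by rewrite Ev i0.
split => //.
rewrite Wsum_eq; set F := fun i : 'I_p => (w i)%:R * zeta p ^+ i.
have nF : forall i, `|F i| = (w i)%:R.
  by move=> i; rewrite /F normrM normrX norm_zeta // expr1n mulr1 normr_nat.
have le : `|\sum_(i < p) F i| <= (#|K|)%:R.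
  rewrite -sum_w natr_sum; apply: le_trans (ler_norm_sum _ _ _) _.
  by rewrite le_eqVlt; apply/orP; left; apply/eqP; apply: eq_bigr => i _; rewrite nF.
rewrite lt_neqAle le andbT; apply/negP => /eqP E.
have E' : `|\sum_(i < p) F i| = \sum_(i < p) `|F i|.
  by rewrite E -sum_w natr_sum; apply: eq_bigr => i _; rewrite nF.
have [t t1 Ft] := normC_sum_eq E'.
pose i0 : 'I_p := Ordinal p_gt0.
have t_1 : t = 1.
  have := Ft i0 isT; rewrite nF /F expr0 mulr1 => /esym/eqP.
  rewrite -subr_eq0 -{2}(mulr1 (w i0)%:R) -mulrBr mulf_eq0 pnatr_eq0.
  by rewrite (gtn_eqF (w0 i0 erefl)) /= subr_eq0 => /eqP.
have wz : forall i : 'I_p, i != i0 -> w i = 0%N.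
  move=> i ne; have := Ft i isT; rewrite nF t_1 mulr1 /F => /eqP.
  rewrite -subr_eq0 -{2}(mulr1 (w i)%:R) -mulrBr mulf_eq0 pnatr_eq0 subr_eq0.
  case/orP => [/eqP //|].
  rewrite -(prim_order_dvd (zeta_prim prp)) => dv.
  have : nat_of_ord i = 0%N.
    have [//|ipos] := posnP i.
    by have := dvdn_leq ipos dv; have := ltn_ord i; lia.
  by move=> ival; move: ne; rewrite -val_eqE /= ival eqxx.
have := wlt i0; rewrite -sum_w (bigD1 i0) //= big1 ?addn0 ?ltnn //.
Qed.
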